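(* Let $\mathfrak A$ and $\mathcal A$ be Banach algebras with $\mathcal A$ a commutative Banach $\mathfrak A$-bimodule with compatible actions, and let $X,Y$ be commutative Banach $\mathcal A$-$\mathfrak A$-modules, regarded as left Banach $\mathcal A\widehat\otimes_{\mathfrak A}\mathcal A^{op}$-modules via $(a\otimes b)\cdot x=a\cdot x\cdot b$. (i) If $\phi:X\to Y$ is a bounded $\mathcal A$-$\mathfrak A$-module homomorphism, then $\phi$ is a left $\mathcal A\widehat\otimes_{\mathfrak A}\mathcal A^{op}$-$\mathfrak A$-module homomorphism. (ii) If $Y$ is an essential $\mathcal A$-bimodule and $\varphi:X^*\to Y^*$ is a bounded right $\mathcal A\widehat\otimes_{\mathfrak A}\mathcal A^{op}$-$\mathfrak A$-module homomorphism, then $\varphi$ is an $\mathcal A$-$\mathfrak A$-module homomorphism.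
   Context: Compatible actions: $\alpha\cdot(ab)=(\alpha\cdot a)b$, $(ab)\cdot\alpha=a(b\cdot\alpha)$; commutative means $\alpha\cdot a=a\cdot\alpha$. A Banach $\mathcal A$-$\mathfrak A$-module is a Banach space $X$ which is a Banach $\mathcal A$-bimodule and $\mathfrak A$-bimodule with $\alpha\cdot(a\cdot x)=(\alpha\cdot a)\cdot x$, $a\cdot(\alpha\cdot x)=(a\cdot\alpha)\cdot x$, $a\cdot(x\cdot\alpha)=(a\cdot x)\cdot\alpha$ and analogous right identities; commutative if $\alpha\cdot x=x\cdot\alpha$; $X^*$ has the dual actions. $\mathcal A^{op}$ is $\mathcal A$ with reversed product; $\mathcal A\widehat\otimes_{\mathfrak A}\mathcal A^{op}=(\mathcal A\widehat\otimes\mathcal A)/I$, $I$ the closed span of $a\cdot\alpha\otimes b-a\otimes\alpha\cdot b$, is a Banach algebra with $(a\otimes b)(c\otimes d)=ac\otimes db$ and an $\mathfrak A$-bimodule via $\alpha\cdot(a\otimes b)=(\alpha\cdot a)\otimes b$, $(a\otimes b)\cdot\alpha=a\otimes(b\cdot\alpha)$; the action $(a\otimes b)\cdot x=a\cdot x\cdot b$ is well defined on it. $X^*$ is a right $\mathcal A\widehat\otimes_{\mathfrak A}\mathcal A^{op}$-module via $\langle x,f\cdot m\rangle=\langle m\cdot x,f\rangle$. An $\mathcal A$-$\mathfrak A$-module homomorphism is a map that is both an $\mathcal A$-bimodule and an $\mathfrak A$-bimodule homomorphism; a left (right) $\mathcal A\widehat\otimes_{\mathfrak A}\mathcal A^{op}$-$\mathfrak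 A$-module homomorphism is one that is a left (right) $\mathcal A\widehat\otimes_{\mathfrak A}\mathcal A^{op}$-module homomorphism and an $\mathfrak A$-bimodule homomorphism. $Y$ is an essential $\mathcal A$-bimodule if $\mathrm{span}\{a\cdot y\cdot b\}$ is dense in $Y$. *)

(* Defs.v *)
From HB Require Import structures.
From mathcomp Require Import all_boot all_order all_algebra.
From mathcomp Require Import all_classical all_reals all_analysis.
Set Implicit Arguments. Unset Strict Implicit. Unset Printing Implicit Defensive.
Import Order.TTheory GRing.Theory Num.Theory.
Import numFieldNormedType.Exports.
Local Open Scope classical_set_scope.
Local Open Scope ring_scope.

Section BanachDefs.
Variable K : numFieldType.

Definition bilin (U V W : normedModType K) (f : U -> V -> W) : Prop :=
  (forall (k : K) u u' v, f (k *: u + u') v = k *: f u v + f u' v) /\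
  (forall (k : K) u v v', f u (k *: v + v') = k *: f u v + f u v').

Definition banach_algebra (B : completeNormedModType K) (mul : B -> B -> B) : Prop :=
  [/\ bilin mul,
      (forall a b c, mul a (mul b c) = mul (mul a b) c) &
      (forall a b, `|mul a b| <= `|a| * `|b|)].

(* Banach B-bimodule structure on a Banach space M, with left action l
   (b . m = l b m) and right action r (m . b = r m b). *)
Definition banach_bimodule (B : completeNormedModType K) (mul : B -> B -> B)
  (M : completeNormedModType K) (l : B -> M -> M) (r : M -> B -> M) : Prop :=
  [/\ bilin l, bilin r,
      (forall b c m, l (mul b c) m = l b (l c m)),
      (forall b c m, r m (mul b c) = r (r m b) c) &
      (forall b c m, l b (r m c) = r (l b m) c)] /\
  (forall b m, `|l b m| <= `|b| * `|m|) /\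
  (forall b m, `|r m b| <= `|m| * `|b|).

Definition compatible_actions (A AA : completeNormedModType K)
  (mA : A -> A -> A) (lAA : AA -> A -> A) (rAA : A -> AA -> A) : Prop :=
  (forall al a b, lAA al (mA a b) = mA (lAA al a) b) /\
  (forall al a b, rAA (mA a b) al = mA a (rAA b al)).

Definition banach_A_AA_module (A AA : completeNormedModType K)
  (mA : A -> A -> A) (mAA : AA -> AA -> AA)
  (lAA : AA -> A -> A) (rAA : A -> AA -> A)
  (X : completeNormedModType K)
  (laX : A -> X -> X) (raX : X -> A -> X)
  (lAX : AA -> X -> X) (rAX : X -> AA -> X) : Prop :=
  banach_bimodule mA laX raX /\ banach_bimodule mAA lAX rAX /\
  [/\ (forall al a x, lAX al (laX a x) = laX (lAA al a) x),
      (forall al a x, laX a (lAX al x) = laX (rAA a al) x) &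
      (forall al a x, laX a (rAX x al) = rAX (laX a x) al)] /\
  [/\ (forall al a x, rAX (raX x a) al = raX x (rAA a al)),
      (forall al a x, raX (rAX x al) a = raX x (lAA al a)) &
      (forall al a x, raX (lAX al x) a = lAX al (raX x a))].

(* An element of the completed projective tensor product, hence of its
   quotient A (x)^_AA A^op, is represented by sum_n a_n (x) b_n with
   sum_n ||a_n|| ||b_n|| < oo. *)
Definition abs_summable_pairs (A : completeNormedModType K) (a b : nat -> A) : Prop :=
  cvgn (series (fun n => `|a n| * `|b n|)).

Definition tens_act (A X : completeNormedModType K)
  (laX : A -> X -> X) (raX : X -> A -> X) (a b : nat -> A) (x : X) : X :=
  limn (series (fun n => laX (a n) (raX x (b n)))).

Definition bounded_linear (X Y : normedModType K) (phi : X -> Y) : Prop :=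
  (forall (k : K) x x', phi (k *: x + x') = k *: phi x + phi x') /\
  (exists C : K, forall x, `|phi x| <= C * `|x|).

(* Elements of the dual space X^* : bounded linear functionals X -> K *)
Definition dual_elt (X : normedModType K) (f : X -> K) : Prop :=
  (forall (k : K) x x', f (k *: x + x') = k * f x + f x') /\
  (exists M : K, forall x, `|f x| <= M * `|x|).

Definition dual_l (B X : Type) (r : X -> B -> X) (b : B) (f : X -> K) : X -> K :=
  fun x => f (r x b).
Definition dual_r (B X : Type) (l : B -> X -> X) (f : X -> K) (b : B) : X -> K :=
  fun x => f (l b x).

Definition dual_tens_act (A X : completeNormedModType K)
  (laX : A -> X -> X) (raX : X -> A -> X) (f : X -> K) (a b : nat -> A) : X -> K :=
  fun x => f (tens_act laX raX a b x).

(* Bounded linear map X^* -> Y^* (phi is only relevant on X^* ):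
   maps X^* into Y^*, is linear on X^*, and ||phi f|| <= C ||f||
   (operator norms written out). *)
Definition bounded_linear_dual (X Y : normedModType K)
  (phi : (X -> K) -> (Y -> K)) : Prop :=
  [/\ (forall f, dual_elt f -> dual_elt (phi f)),
      (forall (k : K) f g, dual_elt f -> dual_elt g ->
          forall y, phi (fun x => k * f x + g x) y = k * phi f y + phi g y) &
      (exists C : K, forall f (M : K), dual_elt f -> 0 <= M ->
          (forall x, `|f x| <= M * `|x|) -> forall y, `|phi f y| <= C * M * `|y|)].

Definition essential_bimodule (A Y : completeNormedModType K)
  (laY : A -> Y -> Y) (raY : Y -> A -> Y) : Prop :=
  closure [set y | exists s : seq (K * A * Y * A),
             y = \sum_(t <- s) t.1.1.1 *: laY t.1.1.2 (raY t.1.2 t.2)] = [set: Y].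

End BanachDefs.

(* Main.v *)
Require Import Defs.
From HB Require Import structures.
From mathcomp Require Import all_boot all_order all_algebra.
From mathcomp Require Import all_classical all_reals all_analysis.
Import Order.TTheory GRing.Theory Num.Theory.
Import numFieldNormedType.Exports.
Local Open Scope classical_set_scope.
Local Open Scope ring_scope.

Set Implicit Arguments. Unset Strict Implicit.
Section H.
Variable K : numFieldType.

Lemma addf0 (U V : zmodType) (f : U -> V) :
  (forall x y, f (x + y) = f x + f y) -> f 0 = 0.
Proof.
move=> h; have e := h 0 0; rewrite addr0 in e.
by have := congr1 (fun z => z - f 0) e; rewrite subrr addrK.
Qed.

Lemma addfB (U V : zmodType) (f : U -> V) :
  (forall x y, f (x + y) = f x + f y) -> forall x y, f (x - y) = f x - f y.
Proof. by move=> h x y; rewrite -[in f x](subrK y x) h addrK. Qed.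

Lemma lin_add (U V : normedModType K) (f : U -> V) :
  (forall (k : K) x x', f (k *: x + x') = k *: f x + f x') ->
  forall x y, f (x + y) = f x + f y.
Proof. by move=> h x y; have := h 1 x y; rewrite !scale1r. Qed.

Lemma dual_add (U : normedModType K) (f : U -> K) :
  dual_elt f -> forall x y, f (x + y) = f x + f y.
Proof. by move=> [h _] x y; have := h 1 x y; rewrite scale1r mul1r. Qed.

Lemma dual_scale (U : normedModType K) (f : U -> K) :
  dual_elt f -> forall k x, f (k *: x) = k * f x.
Proof.
move=> hf k x; have := (hf.1 k x 0); rewrite addr0 (addf0 (dual_add hf)) addr0.
done.
Qed.

Lemma bound_norm (a C z : K) : 0 <= a -> 0 <= z -> a <= C * z -> a <= `|C| * z.
Proof.
move=> a0 z0 h; have Cz : 0 <= C * z by exact: le_trans h.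
by rewrite -(ger0_norm z0) -normrM (ger0_norm Cz).
Qed.

Lemma series_cst1 (V : normedModType K) (w : nat -> V) :
  (forall n, w n.+1 = 0) -> series w @ \oo --> w 0%N.
Proof.
move=> h; apply: cvg_near_cst; exists 1%N => // n /= hn.
case: n hn => // n _; rewrite /series /= big_nat_recl //= big1 ?addr0 //.
Qed.

Lemma dense_ext (A Y : completeNormedModType K) (laY : A -> Y -> Y) (raY : Y -> A -> Y)
  (F : Y -> K) : essential_bimodule laY raY ->
  (forall x y, F (x + y) = F x + F y) -> (forall k y, F (k *: y) = k * F y) ->
  (exists M, forall y, `|F y| <= M * `|y|) ->
  (forall c y d, F (laY c (raY y d)) = 0) -> forall y, F y = 0.
Proof.
move=> hess Fadd Fsc [M HM] Hgen y.
have span : forall s : seq (K * A * Y * A),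
  F (\sum_(t <- s) t.1.1.1 *: laY t.1.1.2 (raY t.1.2 t.2)) = 0.
  elim=> [|t s IH]; first by rewrite big_nil (addf0 Fadd).
  by rewrite big_cons Fadd Fsc Hgen IH mulr0 addr0.
have HM' : forall z, `|F z| <= (`|M| + 1) * `|z|.
  move=> z; apply: le_trans (bound_norm _ _ (HM z)) _ => //.
  by rewrite ler_wpM2r // lerDl.
have M0 : 0 < `|M| + 1 by rewrite ltr_wpDl.
have : closure [set y | exists s : seq (K * A * Y * A),
             y = \sum_(t <- s) t.1.1.1 *: laY t.1.1.2 (raY t.1.2 t.2)] y.
  by rewrite hess.
move=> hcl; apply/eqP; rewrite -normr_eq0; apply/negPn/negP => hne.
have e0 : 0 < `|F y| / (`|M| + 1) by rewrite divr_gt0 // normr_gt0 -normr_eq0.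
have [z [[s ->] hz]] := hcl _ (@nbhsx_ballx _ _ y _ e0).
move: hz; rewrite -ball_normE /ball_ /= => hz.
have : `|F y| < `|F y|.
  have -> : F y = F (y - \sum_(t <- s) t.1.1.1 *: laY t.1.1.2 (raY t.1.2 t.2)).
    by rewrite (addfB Fadd) span subr0.
  apply: (le_lt_trans (HM' _)).
  rewrite -ltr_pdivlMl // mulrC.
  by rewrite (addfB Fadd) span subr0.
by rewrite ltxx.
Qed.

Lemma bil_l0 (A X : normedModType K) (l : A -> X -> X) : bilin l -> forall m, l 0 m = 0.
Proof. by move=> [h _] m; apply: (addf0 (lin_add (f := fun u => l u m) _)) => k u u'; exact: h. Qed.

Definition seq1 (A : zmodType) (c : A) : nat -> A := fun n => if n is 0%N then c else 0.

Lemma tens1 (A X : completeNormedModType K) (la : A -> X -> X) (ra : X -> A -> X) c d x :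
  bilin la -> tens_act la ra (seq1 c) (seq1 d) x = la c (ra x d).
Proof.
move=> hl; rewrite /tens_act; apply: cvg_lim => //; apply: series_cst1 => n /=.
exact: bil_l0.
Qed.

Lemma abs1 (A : completeNormedModType K) (c d : A) : abs_summable_pairs (seq1 c) (seq1 d).
Proof.
rewrite /abs_summable_pairs; apply: (cvgP (`|c| * `|d|)).
by apply: (series_cst1 (w := fun n => `|seq1 c n| * `|seq1 d n|)) => n /=; rewrite normr0 mul0r.
Qed.

Lemma tens_cvg (A X : completeNormedModType K) (la : A -> X -> X) (ra : X -> A -> X) a b x :
  (forall b m, `|la b m| <= `|b| * `|m|) -> (forall b m, `|ra m b| <= `|m| * `|b|) ->
  abs_summable_pairs a b -> cvgn (series (fun n => la (a n) (ra x (b n)))).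
Proof.
move=> hl hr hab.
have x0 : 0 < `|x| + 1 by rewrite ltr_wpDl.
apply/cauchy_cvgP/cauchy_seriesP => e e0.
have hv := (cauchy_seriesP _).1 (@cvg_cauchy _ _ _ hab).
have := hv _ (e / (`|x| + 1)) (divr_gt0 e0 x0).
move=> hh; apply: (@filterS _ _ (filter_prod_filter _ _) _ _ _ (hh _)) => n hn.
have vge0 : forall k, 0 <= `|a k| * `|b k| by move=> k; rewrite mulr_ge0.
apply: (le_lt_trans (ler_norm_sum _ _ _)).
apply: (@le_lt_trans _ _ (\sum_(n.1 <= k < n.2) (`|x| + 1) * (`|a k| * `|b k|))).
  apply: ler_sum => k _; apply: (le_trans (hl _ _)).
  rewrite (mulrCA (`|x| + 1)); apply: ler_wpM2l => //.
  apply: (le_trans (hr _ _)); rewrite ler_wpM2r //.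
  by rewrite lerDl.
rewrite -mulr_sumr.
rewrite -(@ltr_pM2l _ (`|x| + 1)^-1) ?invr_gt0 // mulKf ?gt_eqF //.
rewrite mulrC; apply: le_lt_trans hn.
by rewrite ger0_norm ?sumr_ge0.
Unshelve. all: by end_near.
Qed.

Lemma lin_lim (X Y : completeNormedModType K) (phi : X -> Y) (s : nat -> X) :
  bounded_linear phi -> cvgn s -> limn (phi \o s) = phi (limn s).
Proof.
move=> [hlin [C hC]] hs; apply: cvg_lim => //.
have C0 : 0 < `|C| + 1 by rewrite ltr_wpDl.
apply/cvgrPdist_lt => e e0.
move/cvgrPdist_lt: hs => /(_ (e / (`|C| + 1)) (divr_gt0 e0 C0)).
apply: filterS => n hn /=.
rewrite -(addfB (lin_add hlin)).
apply: (le_lt_trans (bound_norm _ _ (hC _))) => //.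
apply: (@le_lt_trans _ _ ((`|C| + 1) * `|limn s - s n|)).
  by rewrite ler_wpM2r // lerDl.
by rewrite -ltr_pdivlMl // mulrC.
Qed.

Lemma dual_comp (U : normedModType K) (f : U -> K) (T : U -> U) : dual_elt f ->
    (forall k x x', T (k *: x + x') = k *: T x + T x') ->
    (exists N, forall x, `|T x| <= N * `|x|) -> dual_elt (fun x => f (T x)).
Proof.
  move=> [fl [M HM]] Tl [N HN]; split.
    by move=> k x x'; rewrite Tl fl.
  exists (`|M| * `|N|) => x.
  apply: (le_trans (bound_norm _ _ (HM _))) => //.
  rewrite -mulrA ler_wpM2l //; exact: bound_norm.
Qed.
End H.
Theorem proposition4p1 (K : numFieldType)
  (AA A : completeNormedModType K)
  (mAA : AA -> AA -> AA) (mA : A -> A -> A)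
  (lAA : AA -> A -> A) (rAA : A -> AA -> A)
  (hAA : banach_algebra mAA) (hA : banach_algebra mA)
  (hAbimod : banach_bimodule mAA lAA rAA)
  (hcompat : compatible_actions mA lAA rAA)
  (hAcomm : forall al a, lAA al a = rAA a al)
  (X Y : completeNormedModType K)
  (laX : A -> X -> X) (raX : X -> A -> X)
  (lAX : AA -> X -> X) (rAX : X -> AA -> X)
  (laY : A -> Y -> Y) (raY : Y -> A -> Y)
  (lAY : AA -> Y -> Y) (rAY : Y -> AA -> Y)
  (hX : banach_A_AA_module mA mAA lAA rAA laX raX lAX rAX)
  (hXcomm : forall al x, lAX al x = rAX x al)
  (hY : banach_A_AA_module mA mAA lAA rAA laY raY lAY rAY)
  (hYcomm : forall al y, lAY al y = rAY y al) :
  (* (i) *)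
  (forall phi : X -> Y, bounded_linear phi ->
     (forall a x, phi (laX a x) = laY a (phi x)) ->
     (forall a x, phi (raX x a) = raY (phi x) a) ->
     (forall al x, phi (lAX al x) = lAY al (phi x)) ->
     (forall al x, phi (rAX x al) = rAY (phi x) al) ->
     (forall a b : nat -> A, abs_summable_pairs a b ->
        forall x, phi (tens_act laX raX a b x) = tens_act laY raY a b (phi x)) /\
     (forall al x, phi (lAX al x) = lAY al (phi x)) /\
     (forall al x, phi (rAX x al) = rAY (phi x) al)) /\
  (* (ii) *)
  (essential_bimodule laY raY ->
   forall psi : (X -> K) -> (Y -> K), bounded_linear_dual psi ->
     (forall a b : nat -> A, abs_summable_pairs a b ->
        forall f, dual_elt f -> forall y,
          psi (dual_tens_act laX raX f a b) y = dual_tens_act laY raY (psi f) a b y) ->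
     (forall al f, dual_elt f -> forall y,
          psi (dual_l rAX al f) y = dual_l rAY al (psi f) y) ->
     (forall al f, dual_elt f -> forall y,
          psi (dual_r lAX f al) y = dual_r lAY (psi f) al y) ->
     (forall a f, dual_elt f -> forall y,
          psi (dual_l raX a f) y = dual_l raY a (psi f) y) /\
     (forall a f, dual_elt f -> forall y,
          psi (dual_r laX f a) y = dual_r laY (psi f) a y) /\
     (forall al f, dual_elt f -> forall y,
          psi (dual_l rAX al f) y = dual_l rAY al (psi f) y) /\
     (forall al f, dual_elt f -> forall y,
          psi (dual_r lAX f al) y = dual_r lAY (psi f) al y)).
Proof.
have hXA := hX.1; have hYA := hY.1.
split.
  move=> phi hphi h1 h2 h3 h4; split; last by split.
  move=> a b hab x.
  have Hfun : (fun n => laY (a n) (raY (phi x) (b n))) =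
              phi \o (fun n => laX (a n) (raX x (b n))).
    by apply: funext => n /=; rewrite h1 h2.
  rewrite /tens_act Hfun.
  have -> : series (phi \o (fun n => laX (a n) (raX x (b n)))) =
            phi \o series (fun n => laX (a n) (raX x (b n))).
    apply: funext => n /=.
    by rewrite (big_morph phi (lin_add hphi.1) (addf0 (lin_add hphi.1))).
  rewrite lin_lim //; apply: (tens_cvg (la := laX) (ra := raX) (a := a) (b := b) (x := x)) => //.
  - by case: hXA => _ [].
  - by case: hXA => _ [].
have [[hlX hrX hlmX hrmX hlrX] _] := hXA.
have [[hlY hrY hlmY hrmY hlrY] _] := hYA.
move=> hess psi hpsi htens h3 h4.
have [pdual plin [C pC]] := hpsi.
have key : forall G1 G2 : Y -> K, dual_elt G1 -> dual_elt G2 ->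
    (forall c y d, G1 (laY c (raY y d)) = G2 (laY c (raY y d))) ->
    forall y, G1 y = G2 y.
  move=> G1 G2 e1 e2 heq y; apply/eqP; rewrite -subr_eq0; apply/eqP.
  apply: (dense_ext (F := fun y => G1 y - G2 y) hess).
  - by move=> u v; rewrite (dual_add e1) (dual_add e2) addrACA opprD.
  - by move=> k u; rewrite (dual_scale e1) (dual_scale e2) mulrBr.
  - case: e1 => _ [M1 HM1]; case: e2 => _ [M2 HM2].
    exists (`|M1| + `|M2|) => u.
    apply: (le_trans (ler_normB _ _)); rewrite mulrDl lerD //.
      by apply: bound_norm => //; apply: HM1.
    by apply: bound_norm => //; apply: HM2.
  - by move=> c u d; rewrite heq subrr.
have htens1 : forall f, dual_elt f -> forall c d y,
    psi f (laY c (raY y d)) = psi (fun x => f (laX c (raX x d))) y.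
  move=> f hf c d y.
  have := htens _ _ (@abs1 _ _ c d) f hf y; rewrite /dual_tens_act.
  rewrite tens1 //.
  have -> // : (fun x => f (tens_act laX raX (seq1 c) (seq1 d) x)) =
               (fun x => f (laX c (raX x d))).
  by apply: funext => x; rewrite tens1.
have dl : forall f a, dual_elt f -> dual_elt (dual_l raX a f).
  move=> f a hf; apply: dual_comp => //.
    by move=> k x x'; case: hrX => + _; apply.
  exists `|a| => x; rewrite mulrC; by case: hXA => _ [].
have dr : forall f a, dual_elt f -> dual_elt (dual_r laX f a).
  move=> f a hf; apply: dual_comp => //.
    by move=> k x x'; case: hlX => _; apply.
  exists `|a| => x; by case: hXA => _ [].
have dtens : forall f c d, dual_elt f -> dual_elt (fun x => f (laX c (raX x d))).
  move=> f c d hf; apply: dual_comp => //.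
    move=> k x x'; case: hrX => + _ => ->; by case: hlX => _ ->.
  exists (`|c| * `|d|) => x; case: hXA => _ [hl hr].
  apply: (le_trans (hl _ _)); rewrite -mulrA ler_wpM2l //.
  by rewrite mulrC; apply: hr.
split.
  move=> a f hf y; rewrite /dual_l.
  have hG2 : dual_elt (fun y => psi f (raY y a)).
    apply: dual_comp; first exact: pdual.
      by move=> k x x'; case: hrY => + _; apply.
    exists `|a| => x; rewrite mulrC; by case: hYA => _ [].
  apply: (key _ (fun y => psi f (raY y a)) (pdual _ (dl f a hf)) hG2) => c u d.
  rewrite htens1; last exact: dl.
  rewrite -hlrY -hrmY htens1 //.
  congr psi; apply: funext => x; rewrite /dual_l.
  by rewrite -hlrX -hrmX.
split; last by split.
move=> a f hf y; rewrite /dual_r.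
have hG2 : dual_elt (fun y => psi f (laY a y)).
  apply: dual_comp; first exact: pdual.
    by move=> k x x'; case: hlY => _; apply.
  exists `|a| => x; by case: hYA => _ [].
apply: (key _ (fun y => psi f (laY a y)) (pdual _ (dr f a hf)) hG2) => c u d.
rewrite htens1; last exact: dr.
rewrite -hlmY htens1 //.
congr psi; apply: funext => x; rewrite /dual_r.
by rewrite -hlmX.
Qed.
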